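(* Let $G$ be a graph and $W$ a walk of $G$. Let $E_o$ be the set of edges traversed by $W$ an odd number of times and $E_e$ the set of edges traversed by $W$ a non-zero even number of times. Then $W$ is equivalent to a walk $W_S$ that follows a walk $S$ of $G$ in which each edge of $E_o$ appears exactly once and each edge of $E_e$ appears at most twice.
   Context: A walk of a graph $G$ is a sequence of vertices $u_0u_1\dots u_l$ with $u_tu_{t+1}\in E(G)$ for all $t$ (vertices and edges may repeat). A walk $W'$ follows the walk $W=u_0\dots u_l$ if there are non-negative integers $i_0,\dots,i_{l-1}$ such that $W'=u_0(u_1u_0)^{i_0}u_1(u_2u_1)^{i_1}\dots u_{l-1}(u_lu_{l-1})^{i_{l-1}}u_l$, where $(u_{t+1}u_t)^{i}$ denotes $i$ successive half-turns (going from $u_t$ to $u_{t+1}$ and back) inserted after $u_t$; i.e., $W'$ is obtained by traversing $W$ from start to end and inserting half-turns $u_{t+1}u_tu_{t+1}$ along the edges. Two walks are equivalent if their multisets of traversed edges are equal. *)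

(* Defs.v *)
From mathcomp Require Import all_boot.
Set Implicit Arguments. Unset Strict Implicit. Unset Printing Implicit Defensive.

(* A (simple) graph on a finite vertex type T is given by a symmetric,
   irreflexive adjacency relation e.  Edges are unordered pairs {u,v},
   represented as the set [set u; v]. *)

Section Walks.
Variable T : finType.

Definition is_walk (e : rel T) (W : seq T) : bool :=
  if W is x :: s then path e x s else false.

Definition walk_edges (W : seq T) : seq {set T} :=
  [seq [set p.1; p.2] | p <- zip W (behead W)].

Definition edge_mult (W : seq T) (x y : T) : nat :=
  count_mem [set x; y] (walk_edges W).

Definition walk_equiv (W1 W2 : seq T) : Prop :=
  perm_eq (walk_edges W1) (walk_edges W2).

(* follow_expand x [u_1;...;u_l] [i_0;...;i_{l-1}] =
   x (u_1 x)^{i_0} u_1 (u_2 u_1)^{i_1} ... u_{l-1} (u_l u_{l-1})^{i_{l-1}} u_l *)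
Fixpoint follow_expand (x : T) (s : seq T) (ns : seq nat) : seq T :=
  match s, ns with
  | y :: s', i :: ns' => x :: flatten (nseq i [:: y; x]) ++ follow_expand y s' ns'
  | _, _ => [:: x]
  end.

Definition follows (W' W : seq T) : Prop :=
  match W with
  | x :: s => exists ns : seq nat, size ns = size s /\ W' = follow_expand x s ns
  | [::] => False
  end.
End Walks.

(* Main.v *)
Require Import Defs.
From mathcomp Require Import all_boot.
From mathcomp Require Import zify.
Set Implicit Arguments. Unset Strict Implicit. Unset Printing Implicit Defensive.

Section Proof.
Variable T : finType.
Implicit Types (S W : seq T) (X : {set T}).

Lemma we_cons2 (a b : T) s : walk_edges (a :: b :: s) = [set a; b] :: walk_edges (b :: s).
Proof. by []. Qed.

Lemma we_one (a : T) : walk_edges [:: a] = [::].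
Proof. by []. Qed.

Lemma we_cat A (x : T) s : walk_edges (A ++ x :: s) = walk_edges (rcons A x) ++ walk_edges (x :: s).
Proof.
elim: A => [|a A IH] //.
case: A IH => [|b A] IH; first by [].
change (walk_edges (a :: b :: (A ++ x :: s)) = walk_edges (a :: b :: rcons A x) ++ walk_edges (x :: s)).
rewrite !we_cons2 cat_cons; congr (_ :: _); exact: IH.
Qed.

Lemma we_rev S : walk_edges (rev S) = rev (walk_edges S).
Proof.
elim: S => [|x s IH] //.
case: s IH => [|y s] IH; first by [].
rewrite we_cons2 (rev_cons _ (walk_edges _)).
rewrite rev_cons rev_cons -!cats1 -catA we_cat cats1 -rev_cons IH.
by rewrite we_cons2 we_one setUC cats1.
Qed.

Lemma set2_eq (a b u v : T) : u != v ->
  ([set a; b] == [set u; v]) = ((a == u) && (b == v)) || ((a == v) && (b == u)).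
Proof.
move=> uv; apply/eqP/idP.
- move=> E.
  have hu : u \in [set a; b] by rewrite E !inE eqxx.
  have hv : v \in [set a; b] by rewrite E !inE eqxx orbT.
  move: hu hv uv; rewrite !inE.
  by case/orP=> /eqP-> ; case/orP=> /eqP->; rewrite ?eqxx //= ?andbT ?orbT.
- by case/orP=> /andP[/eqP-> /eqP->] //; rewrite setUC.
Qed.


Lemma mem_cnt (U : eqType) (X : U) (l : seq U) : (X \in l) = (0 < count_mem X l).
Proof. by rewrite -has_pred1 has_count. Qed.

Lemma fe_head (x : T) s ns : exists r, follow_expand x s ns = x :: r.
Proof. by case: s => [|y s]; case: ns => [|i ns] /=; eexists. Qed.

Lemma we_fe (x y : T) i r :
  walk_edges (x :: flatten (nseq i [:: y; x]) ++ y :: r) =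
  nseq i.*2.+1 [set x; y] ++ walk_edges (y :: r).
Proof.
elim: i => [|i IH]; first by rewrite /= we_cons2.
rewrite doubleS.
change (walk_edges (x :: y :: x :: (flatten (nseq i [:: y; x]) ++ y :: r)) =
  [set x; y] :: [set x; y] :: (nseq i.*2.+1 [set x; y] ++ walk_edges (y :: r))).
by rewrite !we_cons2 -IH setUC.
Qed.

Lemma expand (x : T) s (c : {set T} -> nat) :
  (forall X, X \notin walk_edges (x :: s) -> c X = 0) ->
  exists ns, size ns = size s /\ forall X,
    count_mem X (walk_edges (follow_expand x s ns)) =
    count_mem X (walk_edges (x :: s)) + 2 * c X.
Proof.
elim: s x c => [|y s IH] x c H.
  exists [::]; split => // X; by rewrite (H X).
set F := [set x; y].
have weq : walk_edges (x :: y :: s) = F :: walk_edges (y :: s) by [].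
case: (boolP (F \in walk_edges (y :: s))) => Fin.
- have [|ns [sz E]] := IH y c.
    move=> X XN; apply: H; rewrite weq in_cons negb_or; apply/andP; split => //.
    by apply/eqP => XF; move: XN; rewrite XF Fin.
  exists (0 :: ns); split; first by rewrite /= sz.
  move=> X; have [r er] := fe_head y s ns.
  have -> : follow_expand x (y :: s) (0 :: ns) = x :: flatten (nseq 0 [:: y; x]) ++ follow_expand y s ns by [].
  rewrite er we_fe -er count_cat E weq /= addnA.
  by rewrite /F; case: eqP.
- pose c' := fun X => if X == F then 0 else c X.
  have [|ns [sz E]] := IH y c'.
    move=> X XN; rewrite /c'; case: eqP => // /eqP XF; apply: H.
    by rewrite weq in_cons negb_or; apply/andP; split => //.
  exists (c F :: ns); split; first by rewrite /= sz.
  move=> X; have [r er] := fe_head y s ns.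
  have -> : follow_expand x (y :: s) (c F :: ns) = x :: flatten (nseq (c F) [:: y; x]) ++ follow_expand y s ns by [].
  rewrite er we_fe -er count_cat E weq count_nseq /c' /=.
  case: (eqVneq F X) => [<-|FX]. 2: by rewrite mul0n.

  rewrite (count_memPn Fin) mul1n -mul2n; lia.
Qed.


Variable e : rel T.
Hypothesis e_sym : symmetric e.
Hypothesis e_irr : irreflexive e.

Definition good (X : {set T}) := [exists a, exists b, e a b && (X == [set a; b])].

Lemma good2 (a b : T) : good [set a; b] = e a b.
Proof.
apply/idP/idP; last by move=> eab; apply/existsP; exists a; apply/existsP; exists b; rewrite eab eqxx.
case/existsP=> c /existsP[d /andP[ecd /eqP E]].
have cd : c != d by apply: contraTneq ecd => ->; rewrite e_irr.
move/eqP: E; rewrite set2_eq //.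
by case/orP=> /andP[/eqP-> /eqP->] //; rewrite e_sym.
Qed.

Lemma path_good (x : T) s : path e x s = all good (walk_edges (x :: s)).
Proof.
elim: s x => [|y s IH] x //.
by rewrite we_cons2 /= good2 IH.
Qed.

Lemma walk_sub S S' : is_walk e S -> S' != [::] ->
  {subset walk_edges S' <= walk_edges S} -> is_walk e S'.
Proof.
case: S => [|x s] //= ws; case: S' => [|x' s'] // _ sub /=.
rewrite path_good; apply/allP => X /sub XS.
by move: ws; rewrite path_good => /allP; apply.
Qed.

Definition dcount (u v : T) S := count_mem (u, v) (zip S (behead S)).

Lemma cnt_dir (u v : T) S : u != v ->
  count_mem [set u; v] (walk_edges S) = dcount u v S + dcount v u S.
Proof.
move=> uv; rewrite /dcount.
elim: S => [|x s IH] //; case: s IH => [|y s] IH //.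
rewrite we_cons2.
change (([set x; y] == [set u; v]) + count_mem [set u; v] (walk_edges (y :: s)) =
  (((x, y) == (u, v)) + count_mem (u, v) (zip (y :: s) s)) +
  (((x, y) == (v, u)) + count_mem (v, u) (zip (y :: s) s))).
rewrite IH set2_eq // !xpair_eqE.
case: (eqVneq x u) => [->|xu]; case: (eqVneq y v) => [->|yv] /=;
  rewrite ?(negbTE uv) ?(eq_sym v u) ?(negbTE uv) /=; lia.
Qed.

Lemma decomp1 (u v : T) S : (u, v) \in zip S (behead S) ->
  exists A C, S = A ++ u :: v :: C.
Proof.
elim: S => [|x s IH] //; case: s IH => [|y s] IH //.
move=> H; have : (u, v) \in (x, y) :: zip (y :: s) s := H; clear H.
rewrite in_cons => /orP[/eqP [-> ->]|/IH [A [C E]]].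
  by exists [::], s.
by exists (x :: A), C; rewrite E.
Qed.

Lemma decomp2 (u v : T) S : u != v -> 1 < dcount u v S ->
  exists A B C, S = A ++ u :: v :: B ++ u :: v :: C.
Proof.
move=> uv; rewrite /dcount.
elim: S => [|x s IH] //; case: s IH => [|y s] IH //.
move=> H; have : 1 < ((x, y) == (u, v)) + count_mem (u, v) (zip (y :: s) s) := H; clear H.
case: (eqVneq (x, y) (u, v)) => [[-> ->]|_] /=.
  rewrite add1n ltnS -mem_cnt => /decomp1 [[|a A] [C E]].
    by case: E => /eqP; rewrite eq_sym (negbTE uv).
  case: E => _ ->; by exists [::], A, C.
rewrite add0n => /IH [A [B [C E]]].
by exists (x :: A), B, C; rewrite E.
Qed.

Lemma reduce_cnt (A B C : seq T) (u v : T) X :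
  count_mem X (walk_edges (A ++ u :: v :: B ++ u :: v :: C)) =
  count_mem X (walk_edges (A ++ u :: rev B ++ v :: C)) + 2 * (X == [set u; v]).
Proof.
rewrite (we_cat A u) (we_cat A u (rev B ++ v :: C)).
rewrite (we_cons2 u v) (we_cat (v :: B) u (v :: C)) (we_cons2 u v C).
rewrite (we_cat (u :: rev B) v C).
have -> : rcons (u :: rev B) v = rev (rcons (v :: B) u) by rewrite rev_rcons rev_cons.
rewrite we_rev !count_cat /= count_rev.
rewrite count_cat /= (eq_sym [set u; v] X); lia.
Qed.


Lemma walk_edge_e S (a b : T) : is_walk e S -> [set a; b] \in walk_edges S -> e a b.
Proof.
case: S => [|x s] //= ws H; rewrite -good2.
by move: ws; rewrite path_good => /allP; apply.
Qed.

Lemma step (u v : T) S : u != v -> 1 < dcount u v S -> is_walk e S ->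
  exists S0, [/\ is_walk e S0, size S0 < size S &
    forall Y, count_mem Y (walk_edges S) = count_mem Y (walk_edges S0) + 2 * (Y == [set u; v])].
Proof.
move=> uv /(decomp2 uv) [A [B [C ->]]] ws.
exists (A ++ u :: rev B ++ v :: C); split.
- apply: (walk_sub ws); first by case: (A).
  move=> Y; rewrite !mem_cnt reduce_cnt; lia.
- rewrite !size_cat /= size_cat size_rev /= size_cat /=; lia.
- by move=> Y; rewrite reduce_cnt.
Qed.

Lemma reduce S : is_walk e S -> exists S', is_walk e S' /\ forall X,
  [/\ count_mem X (walk_edges S') <= 2,
      count_mem X (walk_edges S') <= count_mem X (walk_edges S),
      odd (count_mem X (walk_edges S')) = odd (count_mem X (walk_edges S)) &
      (0 < count_mem X (walk_edges S) -> 0 < count_mem X (walk_edges S'))].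
Proof.
have [n] := ubnP (size S); elim: n S => // n IH S ltSn wS.
case: (boolP (has (fun X => 2 < count_mem X (walk_edges S)) (walk_edges S)))
  => [/hasP [X XS cX] | /hasPn H]; last first.
  exists S; split => // X; split => //.
  case: (boolP (X \in walk_edges S)) => XS.
    by rewrite leqNgt (H X XS).
  by rewrite (count_memPn XS).
have XS' := XS.
case/mapP: XS' => [[a b] _ XE]; simpl in XE; subst X.
have eab : e a b by apply: (walk_edge_e wS).
have ab : a != b by apply: contraTneq eab => ->; rewrite e_irr.
have [S0 [w0 sz0 c0]] : exists S0, [/\ is_walk e S0, size S0 < size S &
    forall Y, count_mem Y (walk_edges S) = count_mem Y (walk_edges S0) + 2 * (Y == [set a; b])].
  case: (ltnP 1 (dcount a b S)) => h; first exact: step.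
  have h' : 1 < dcount b a S by move: cX; rewrite cnt_dir //; lia.
  have ba : b != a by rewrite eq_sym.
  have [S0 [w0 sz0 c0]] := step ba h' wS.
  by exists S0; split => // Y; rewrite c0 setUC.
have [|S' [w' P']] := IH S0 _ w0; first lia.
exists S'; split => // Y.
have [c1 c2 c3 c4] := P' Y; rewrite c0.
case: (eqVneq Y [set a; b]) => [YE|YN].
- subst Y; move: cX; rewrite c0 eqxx muln1 => cX; rewrite ?eqxx ?muln1.
  split => //; [lia | by rewrite oddD addbF | move=> _; apply: c4; lia].
- by rewrite muln0 addn0; split.
Qed.

End Proof.

Theorem proposition4p4 (T : finType) (e : rel T)
  (e_sym : symmetric e) (e_irr : irreflexive e) (W : seq T) :
  is_walk e W ->
  exists S WS : seq T,
    is_walk e S /\ is_walk e WS /\ follows WS S /\ walk_equiv W WS /\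
    (forall x y, e x y -> odd (edge_mult W x y) -> edge_mult S x y = 1) /\
    (forall x y, e x y -> ~~ odd (edge_mult W x y) -> 0 < edge_mult W x y ->
       edge_mult S x y <= 2).
Proof.
move=> wW.
have [S [wS P]] := reduce e_sym e_irr wW.
case: S wS P => [|x s] // wS P.
pose c := fun X => (count_mem X (walk_edges W) - count_mem X (walk_edges (x :: s)))./2.
have [|ns [sz E]] := @expand _ x s c.
  move=> X XN; rewrite /c; have [_ _ _ c4] := P X.
  case: (posnP (count_mem X (walk_edges W))) => [->|/c4]; first by [].
  by rewrite (count_memPn XN).
have EW : forall X, count_mem X (walk_edges (follow_expand x s ns)) = count_mem X (walk_edges W).
  move=> X; rewrite E /c; have [c1 c2 c3 c4] := P X.
  move: c2 c3; set m := count_mem X (walk_edges W); set k := count_mem X (walk_edges (x :: s)).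
  move=> c2 c3.
  have ev : ~~ odd (m - k) by rewrite oddB // c3 addbb.
  have := odd_double_half (m - k); rewrite (negbTE ev) add0n -mul2n => h.
  rewrite h; lia.
exists (x :: s), (follow_expand x s ns).
split; first done.
split.
  apply: (walk_sub e_sym e_irr wS); first by have [r ->] := fe_head x s ns.
  move=> Y; rewrite !mem_cnt EW; have [_ _ _ c4] := P Y; exact: c4.
split; first by exists ns.
split; first by apply/allP => Y _; apply/eqP; rewrite EW.
split.
  move=> u v _ od; have [c1 _ c3 _] := P [set u; v]; move: c1 c3.
  rewrite /edge_mult in od *; rewrite od.
  by case: (count_mem [set u; v] (walk_edges (x :: s))) => [|[|[|n]]].
move=> u v _ _ _; have [c1 _ _ _] := P [set u; v]; exact: c1.
Qed.
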